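(* Let $V$ be a real vector space of dimension $m\ge3$ with a non-degenerate symmetric inner product of arbitrary signature, and let $R$ be an algebraic curvature tensor on $V$. Then: (1) if $R$ is $k$-stein, then $\operatorname{trace}\{\mathcal{J}_R(x)^k\}=0$ for all $x\in\mathcal{N}$; (2) if $R$ is $m$-stein, then $\mathcal{J}_R(x)$ is nilpotent for all $x\in\mathcal{N}$; (3) if $\operatorname{trace}\{\mathcal{J}_R(x)\}=0$ for all $x\in\mathcal{N}$, then $R$ is Einstein.
   Context: An algebraic curvature tensor is $R\in\otimes^4V^*$ with $R(x,y,z,w)=R(z,w,x,y)=-R(y,x,z,w)$ and $R(x,y,z,w)+R(y,z,x,w)+R(z,x,y,w)=0$. The Jacobi operator is defined by $(\mathcal{J}_R(x)y,w)=R(y,x,x,w)$. The Ricci tensor is $\rho_R(x,y)=\operatorname{trace}\{z\mapsto R(z,x)y\}$, so that $\rho_R(x,x)=\operatorname{trace}\,\mathcal{J}_R(x)$. $R$ is Einstein if there is a constant $c_1$ with $\rho_R(x,y)=c_1(x,y)$ for all $x,y\in V$. $R$ is $k$-stein if there are constants $c_i$ with $\operatorname{trace}\{\mathcal{J}_R(x)^i\}=c_i(x,x)^i$ for all $x\in V$ and $1\le i\le k$. Everything is extended complex-multilinearly to $V_{\mathbb{C}}=V\otimes\mathbb{C}$; $\mathcal{N}=\{v\in V_{\mathbb{C}}:(v,v)=0\}$. A linear map $A$ is nilpotent if $A^m=0$, equivalently $\operatorname{trace}(A^i)=0$ for $1\le i\le m$. *)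

(* Defs.v *)
From HB Require Import structures.
From mathcomp Require Import all_boot all_order all_algebra.
From mathcomp Require Import reals.
From mathcomp Require Import complex.
Set Implicit Arguments. Unset Strict Implicit. Unset Printing Implicit Defensive.
Import Order.TTheory GRing.Theory Num.Theory.
Local Open Scope ring_scope.

Definition ip {F : comNzRingType} {m : nat} (G : 'M[F]_m) (x y : 'rV[F]_m) : F :=
  (x *m G *m y^T) 0 0.

Definition tensor4 (F : Type) (m : nat) := 'I_m -> 'I_m -> 'I_m -> 'I_m -> F.

Definition Rform {F : comNzRingType} {m : nat} (T : tensor4 F m)
  (x y z w : 'rV[F]_m) : F :=
  \sum_(i < m) \sum_(j < m) \sum_(k < m) \sum_(l < m)
     x 0 i * y 0 j * z 0 k * w 0 l * T i j k l.

Definition is_ACT {F : comNzRingType} {m : nat} (T : tensor4 F m) : Prop :=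
  forall x y z w : 'rV[F]_m,
    [/\ Rform T x y z w = Rform T z w x y,
        Rform T x y z w = - Rform T y x z w &
        Rform T x y z w + Rform T y z x w + Rform T z x y w = 0].

(* Jacobi operator: (J(x)y, w) = R(y,x,x,w), i.e. J(x)y = R(y,x)x. *)
Definition jacobi {F : fieldType} {m : nat} (G : 'M[F]_m) (T : tensor4 F m)
  (x : 'rV[F]_m) : 'M[F]_m :=
  (\matrix_(j < m, l < m) Rform T (delta_mx 0 j) x x (delta_mx 0 l)) *m invmx G.

(* Ricci tensor: rho(x,y) = trace { z |-> R(z,x) y }. *)
Definition ricci {F : fieldType} {m : nat} (G : 'M[F]_m) (T : tensor4 F m)
  (x y : 'rV[F]_m) : F :=
  \tr ((\matrix_(i < m, l < m) Rform T (delta_mx 0 i) x y (delta_mx 0 l)) *m invmx G).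

Definition einstein {F : fieldType} {m : nat} (G : 'M[F]_m) (T : tensor4 F m) : Prop :=
  exists c1 : F, forall x y : 'rV[F]_m, ricci G T x y = c1 * ip G x y.

Definition k_stein {F : fieldType} {m : nat} (k : nat) (G : 'M[F]_m) (T : tensor4 F m) : Prop :=
  exists c : nat -> F, forall (x : 'rV[F]_m) (i : nat), (1 <= i <= k)%N ->
    \tr (jacobi G T x ^+ i) = c i * ip G x x ^+ i.

Definition nilpotent_mx {F : fieldType} {m : nat} (A : 'M[F]_m) : Prop :=
  exists n : nat, A ^+ n = 0.

Definition cplxT {R : rcfType} {m : nat} (T : tensor4 R m) : tensor4 (complex R) m :=
  fun i j k l => Complex (T i j k l) 0.
Definition cplxG {R : rcfType} {m : nat} (G : 'M[R]_m) : 'M[complex R]_m :=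
  map_mx (fun r : R => Complex r 0) G.

Definition nullcone {R : rcfType} {m : nat} (G : 'M[R]_m) (v : 'rV[complex R]_m) : Prop :=
  ip (cplxG G) v v = 0.

(* Main.v *)
Require Import Defs.
From HB Require Import structures.
From mathcomp Require Import all_boot all_order all_algebra.
From mathcomp Require Import reals.
From mathcomp Require Import complex.
From mathcomp Require Import spectral.
From mathcomp Require Import ring.
From Stdlib Require Import Classical.
Import Order.TTheory GRing.Theory Num.Theory.
Local Open Scope ring_scope.


Section Gen.

Lemma map_mxX (R1 R2 : comNzRingType) (f : {rmorphism R1 -> R2}) n (A : 'M[R1]_n) k :
  map_mx f (A ^+ k) = (map_mx f A) ^+ k.
Proof.
elim: k => [|k IH]; first by rewrite !expr0 map_scalar_mx rmorph1.
by rewrite !exprS -!mulmxE map_mxM IH.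
Qed.

Lemma Rform_map (F1 F2 : comNzRingType) (f : {rmorphism F1 -> F2}) m (T : tensor4 F1 m) x y z w :
  f (Rform T x y z w) = Rform (fun i j k l => f (T i j k l)) (map_mx f x) (map_mx f y) (map_mx f z) (map_mx f w).
Proof.
rewrite /Rform rmorph_sum; apply: eq_bigr => i _; rewrite rmorph_sum; apply: eq_bigr => j _.
rewrite rmorph_sum; apply: eq_bigr => k _; rewrite rmorph_sum; apply: eq_bigr => l _.
by rewrite !rmorphM !mxE.
Qed.

Definition Jm {F : comNzRingType} {m} (Gi : 'M[F]_m) (T : tensor4 F m) (x : 'rV[F]_m) : 'M[F]_m :=
  (\matrix_(j < m, l < m) Rform T (delta_mx 0 j) x x (delta_mx 0 l)) *m Gi.

Lemma Jm_map (F1 F2 : comNzRingType) (f : {rmorphism F1 -> F2}) m (Gi : 'M[F1]_m) (T : tensor4 F1 m) x :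
  map_mx f (Jm Gi T x) = Jm (map_mx f Gi) (fun i j k l => f (T i j k l)) (map_mx f x).
Proof.
rewrite /Jm map_mxM; congr (_ *m _); apply/matrixP => j l.
by rewrite !mxE Rform_map !map_delta_mx.
Qed.

Definition bf {F : comNzRingType} {m} (S : 'M[F]_m) (x y : 'rV[F]_m) : F := (x *m S *m y^T) 0 0.

Variable (F : comNzRingType) (m : nat).
Implicit Types (S : 'M[F]_m) (x y z : 'rV[F]_m).

Lemma bfDl S x y z : bf S (x + y) z = bf S x z + bf S y z.
Proof. by rewrite /bf !mulmxDl mxE. Qed.
Lemma bfDr S x y z : bf S x (y + z) = bf S x y + bf S x z.
Proof. by rewrite /bf linearD /= mulmxDr mxE. Qed.
Lemma bfZl S a x z : bf S (a *: x) z = a * bf S x z.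
Proof. by rewrite /bf -!scalemxAl mxE. Qed.
Lemma bfZr S a x z : bf S x (a *: z) = a * bf S x z.
Proof. by rewrite /bf linearZ /= -scalemxAr mxE. Qed.
Lemma bf_sym S x y : S^T = S -> bf S x y = bf S y x.
Proof.
move=> hS; rewrite /bf -[in LHS](trmxK (x *m S *m y^T)) mxE.
by rewrite !trmx_mul trmxK hS mulmxA.
Qed.
Lemma bfE S x y : bf S x y = \sum_j \sum_k x 0 j * S j k * y 0 k.
Proof.
rewrite /bf mxE; under eq_bigr do rewrite !mxE mulr_suml.
by rewrite exchange_big.
Qed.

Lemma sum_delta (i : 'I_m) (G : 'I_m -> F) :
  \sum_(j < m) (delta_mx 0 i : 'rV[F]_m) 0 j * G j = G i.
Proof.
rewrite (bigD1 i) //= big1 ?addr0 => [|j /negbTE ne]; first by rewrite mxE !eqxx mul1r.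
by rewrite mxE ne andbF mul0r.
Qed.

Lemma Rform_delta (T : tensor4 F m) i x y l :
  Rform T (delta_mx 0 i) x y (delta_mx 0 l) = \sum_j \sum_k x 0 j * y 0 k * T i j k l.
Proof.
rewrite /Rform.
transitivity (\sum_(i0 < m) (delta_mx 0 i : 'rV[F]_m) 0 i0 * 
   \sum_j \sum_k \sum_(l0 < m) (delta_mx 0 l : 'rV[F]_m) 0 l0 * (x 0 j * y 0 k * T i0 j k l0)).
  apply: eq_bigr => i0 _; rewrite mulr_sumr; apply: eq_bigr => j _; rewrite mulr_sumr.
  apply: eq_bigr => k _; rewrite mulr_sumr; apply: eq_bigr => l0 _.
  by ring.
rewrite sum_delta; apply: eq_bigr => j _; apply: eq_bigr => k _; exact: sum_delta.
Qed.

Lemma Rform_e (T : tensor4 F m) a b c d :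
  Rform T (delta_mx 0 a) (delta_mx 0 b) (delta_mx 0 c) (delta_mx 0 d) = T a b c d.
Proof.
rewrite Rform_delta.
under eq_bigr do under eq_bigr do rewrite -mulrA.
under eq_bigr do rewrite -mulr_sumr sum_delta.
exact: sum_delta.
Qed.

End Gen.


Definition Sm {F : fieldType} {m} (G : 'M[F]_m) (T : tensor4 F m) : 'M[F]_m :=
  \matrix_(j, k) \sum_a \sum_b T a j k b * invmx G b a.

Lemma ricci_bf (F : fieldType) m (G : 'M[F]_m) T x y : ricci G T x y = bf (Sm G T) x y.
Proof.
rewrite bfE /ricci /mxtrace.
under eq_bigr do rewrite mxE.
under eq_bigr do under eq_bigr do rewrite mxE Rform_delta mulr_suml.
under eq_bigr do under eq_bigr do under eq_bigr do rewrite mulr_suml.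
under eq_bigr do rewrite exchange_big.
rewrite exchange_big.
under eq_bigr do under eq_bigr do rewrite exchange_big.
under eq_bigr do rewrite exchange_big.
apply: eq_bigr => j _; apply: eq_bigr => k _.
rewrite mxE mulr_sumr mulr_suml; apply: eq_bigr => a _.
rewrite mulr_sumr mulr_suml; apply: eq_bigr => b _.
by ring.
Qed.

Lemma ACT_swap (F : comNzRingType) m (T : tensor4 F m) : is_ACT T ->
  forall a j k b, T a j k b = T b k j a.
Proof.
move=> h a j k b; rewrite -!Rform_e.
have [p1 _ _] := h (delta_mx 0 a) (delta_mx 0 j) (delta_mx 0 k) (delta_mx 0 b).
have [_ a2 _] := h (delta_mx 0 k) (delta_mx 0 b) (delta_mx 0 a) (delta_mx 0 j).
have [p3 _ _] := h (delta_mx 0 b) (delta_mx 0 k) (delta_mx 0 a) (delta_mx 0 j).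
have [_ a4 _] := h (delta_mx 0 a) (delta_mx 0 j) (delta_mx 0 b) (delta_mx 0 k).
have [p5 _ _] := h (delta_mx 0 j) (delta_mx 0 a) (delta_mx 0 b) (delta_mx 0 k).
by rewrite p1 a2 p3 a4 p5 opprK.
Qed.

Lemma Sm_sym (F : fieldType) m (G : 'M[F]_m) T : G^T = G -> is_ACT T -> (Sm G T)^T = Sm G T.
Proof.
move=> hG hT; have hGi : (invmx G)^T = invmx G by rewrite trmx_inv hG.
apply/matrixP => j k; rewrite !mxE.
under [RHS]eq_bigr do under eq_bigr do rewrite (@ACT_swap _ _ T hT).
rewrite [RHS]exchange_big; apply: eq_bigr => a _; apply: eq_bigr => b _.
by rewrite -[in RHS]hGi mxE.
Qed.


Lemma poly_nat_roots (C : numFieldType) (p : {poly C}) : (forall n : nat, p.[n%:R] = 0) -> p = 0.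
Proof.
move=> h; apply/eqP; apply: contraT => nz.
have := @max_poly_roots _ p [seq i%:R | i <- iota 0 (size p)] nz.
rewrite size_map size_iota ltnn; apply.
  by apply/allP => _ /mapP [i _ ->]; rewrite /root h.
by rewrite map_inj_uniq ?iota_uniq // => i j /eqP; rewrite eqr_nat => /eqP.
Qed.

Lemma bf_lin (F : comNzRingType) m (S G : 'M[F]_m) a b x y :
  bf (a *: S + b *: G) x y = a * bf S x y + b * bf G x y.
Proof. by rewrite /bf mulmxDr mulmxDl -!scalemxAr -!scalemxAl !mxE. Qed.

Lemma bf_quad (F : comNzRingType) m (M : 'M[F]_m) y x t : M^T = M ->
  bf M (y + t *: x) (y + t *: x) = bf M y y + 2 * t * bf M y x + t ^+ 2 * bf M x x.
Proof.
move=> hM; rewrite !bfDl !bfDr !bfZl !bfZr (@bf_sym _ _ M y x hM).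
by ring.
Qed.

Lemma bf_e (F : comNzRingType) m (M : 'M[F]_m) i j :
  bf M (delta_mx 0 i) (delta_mx 0 j) = M i j.
Proof.
rewrite bfE.
under eq_bigr do (under eq_bigr do rewrite -mulrA; rewrite -mulr_sumr).
rewrite sum_delta.
under eq_bigr do rewrite mulrC.
by rewrite sum_delta.
Qed.

Section Core.
Variables (C : numClosedFieldType) (m : nat) (G S : 'M[C]_m) (x0 : 'rV[C]_m).
Hypotheses (hm : (2 <= m)%N) (hG : G^T = G) (hS : S^T = S) (hGu : G \in unitmx)
  (ha : bf G x0 x0 != 0) (hnull : forall v, bf G v v = 0 -> bf S v v = 0).

Let a := bf G x0 x0.
Let B := a *: S + (- bf S x0 x0) *: G.

Let hB : B^T = B.
Proof. by rewrite /B linearD /= !linearZ /= hS hG. Qed.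

Let B0 : bf B x0 x0 = 0.
Proof. by rewrite /B bf_lin -/a; ring. Qed.

Let Bnull v : bf G v v = 0 -> bf B v v = 0.
Proof. by move=> h; rewrite /B bf_lin h (hnull v h); ring. Qed.

Let D y := bf G x0 y ^+ 2 - a * bf G y y.

Let step1 y : D y != 0 -> bf B y x0 = 0 /\ bf B y y = 0.
Proof.
move=> hD; set b := bf G x0 y; set c := bf G y y; set s := sqrtC (D y).
have hs : s ^+ 2 = b ^+ 2 - a * c by rewrite sqrtCK.
have s0 : s != 0 by rewrite sqrtC_eq0.
have root t : a * t ^+ 2 + 2 * b * t + c = 0 -> bf G (y + t *: x0) (y + t *: x0) = 0.
  by move=> ht; rewrite bf_quad // (@bf_sym _ _ G y x0 hG) -/b -/c -/a -ht; ring.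
have rt e : e ^+ 2 = 1 -> a * ((- b + e * s) / a) ^+ 2 + 2 * b * ((- b + e * s) / a) + c = 0.
  move=> he; apply/eqP.
  suff /eqP : (a * ((- b + e * s) / a) ^+ 2 + 2 * b * ((- b + e * s) / a) + c) * a = 0.
    by rewrite mulf_eq0 (negbTE ha) orbF.
  have -> : (a * ((- b + e * s) / a) ^+ 2 + 2 * b * ((- b + e * s) / a) + c) * a
    = a * c - b ^+ 2 + e ^+ 2 * s ^+ 2 by field.
  by rewrite he mul1r hs; ring.
have E e : e ^+ 2 = 1 -> bf B y y + 2 * ((- b + e * s) / a) * bf B y x0 = 0.
  move=> he; have := Bnull _ (root _ (rt e he)).
  by rewrite bf_quad // B0 mulr0 addr0.
have E1 := E 1 (expr1n _ _).
have E2 := E (-1) (etrans (sqrrN _) (expr1n _ _)).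
have hbeta : bf B y x0 = 0.
  have : (bf B y y + 2 * ((- b + 1 * s) / a) * bf B y x0) -
     (bf B y y + 2 * ((- b + (-1) * s) / a) * bf B y x0) = 0 by rewrite E1 E2 subrr.
  have -> : (bf B y y + 2 * ((- b + 1 * s) / a) * bf B y x0) -
     (bf B y y + 2 * ((- b + (-1) * s) / a) * bf B y x0) = (4 * s / a) * bf B y x0 by field.
  move/eqP; rewrite mulf_eq0 => /orP [|/eqP //].
  by rewrite !mulf_eq0 invr_eq0 (negbTE s0) (negbTE ha) pnatr_eq0.
by split => //; move: E1; rewrite hbeta mulr0 addr0.
Qed.


Let polar y z : bf G x0 y * bf G x0 z *+ 2 - a * bf G y z *+ 2 = D (y + z) - D y - D z.
Proof.
rewrite /D !bfDr !bfDl (@bf_sym _ _ G z y hG).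
by ring.
Qed.

Let step2 : exists y0, D y0 != 0.
Proof.
apply: NNPP => hn.
have hall y : D y = 0.
  by apply/eqP; apply: contraT => hy; case: hn; exists y.
have hp y z : bf G y z = a^-1 * (bf G x0 y * bf G x0 z).
  have := polar y z; rewrite (hall (y + z)) (hall y) (hall z) !subrr => /eqP; rewrite subr_eq0 => /eqP.
  rewrite -(mulr_natr (bf G x0 y * bf G x0 z)) -(mulr_natr (a * bf G y z)) => /(mulIf _) h.
  have h2 : (2%:R : C) != 0 by rewrite pnatr_eq0.
  by rewrite (h h2) mulrA mulVf // mul1r.
pose u := x0 *m G.
have hu i : bf G x0 (delta_mx 0 i) = u 0 i.
  rewrite bfE mxE; apply: eq_bigr => j _.
  by under eq_bigr do rewrite mulrC; rewrite sum_delta mulrC.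
have hGe : G = a^-1 *: (u^T *m u).
  apply/matrixP => i j; rewrite -bf_e hp !hu !mxE big_ord1 !mxE.
  by [].
have := mxrank_unit hGu; rewrite {1}hGe => hr.
have : (\rank (a^-1 *: (u^T *m u)) <= 1)%N.
  apply: leq_trans (mxrank_scale _ _) _.
  apply: leq_trans (mxrankM_maxr _ _) _.
  exact: rank_leq_row.
by rewrite hr => /(leq_trans hm).
Qed.

Let step3 w : bf B w w = 0.
Proof.
have [y0 hy0] := step2.
set b0 := bf G x0 y0; set bw := bf G x0 w; set q0 := bf G y0 y0.
set q01 := bf G y0 w; set qw := bf G w w.
set c0 := bf B y0 y0; set c01 := bf B y0 w; set cw := bf B w w.
pose Dp : {poly C} := (b0%:P + bw%:P * 'X) ^+ 2 - a%:P * (q0%:P + (2 * q01)%:P * 'X + qw%:P * 'X * 'X).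
pose Bp : {poly C} := c0%:P + (2 * c01)%:P * 'X + cw%:P * 'X * 'X.
have hD s : Dp.[s] = D (y0 + s *: w).
  rewrite /D bfDr bfZr bf_quad // /Dp.
  by rewrite !hornerE /b0 /bw /q0 /q01 /qw; ring.
have hBv s : Bp.[s] = bf B (y0 + s *: w) (y0 + s *: w).
  by rewrite bf_quad // /Bp !hornerE /c0 /c01 /cw; ring.
have hprod : Dp * Bp = 0.
  apply: poly_nat_roots => n; rewrite hornerM hD hBv.
  have [->|hn] := eqVneq (D (y0 + n%:R *: w)) 0; first by rewrite mul0r.
  by have [_ ->] := step1 _ hn; rewrite mulr0.
have hDp : Dp != 0.
  apply/eqP => h0; move: hy0; rewrite -[y0]addr0 -(scale0r w) -hD h0 horner0.
  by rewrite eqxx.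
move/eqP: hprod; rewrite mulf_eq0 (negbTE hDp) /= => /eqP hB0.
have := congr1 (fun p : {poly C} => p`_2) hB0.
by rewrite /Bp !coefE /=; rewrite !mulr0 !add0r mulr1 => ->.
Qed.

Lemma core_result w : bf S w w * bf G x0 x0 = bf S x0 x0 * bf G w w.
Proof.
have := step3 w; rewrite /B bf_lin -/a => h.
by apply/eqP; rewrite -subr_eq0; apply/eqP; rewrite -h; ring.
Qed.

End Core.


Lemma trig_mul (F : comNzRingType) n (A B : 'M[F]_n) : is_trig_mx A -> is_trig_mx B ->
  is_trig_mx (A *m B) /\ forall i, (A *m B) i i = A i i * B i i.
Proof.
move=> /is_trig_mxP hA /is_trig_mxP hB; split.
  apply/is_trig_mxP => i j hij; rewrite mxE big1 // => l _.
  have [hil|hli] := ltnP i l; first by rewrite hA // mul0r.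
  by rewrite hB ?mulr0 // (leq_ltn_trans hli hij).
move=> i; rewrite mxE (bigD1 i) //= big1 ?addr0 // => l hl.
have [hil|hli] := ltnP i l; first by rewrite hA // mul0r.
by rewrite hB ?mulr0 // ltn_neqAle hl hli.
Qed.

Lemma trig_exp (F : comNzRingType) n (A : 'M[F]_n) k : is_trig_mx A ->
  is_trig_mx (A ^+ k) /\ forall i, (A ^+ k) i i = A i i ^+ k.
Proof.
move=> hA; elim: k => [|k [IH1 IH2]].
  by split; [rewrite expr0; exact: scalar_mx_is_trig | move=> i; rewrite expr0 !mxE eqxx].
have [h1 h2] := trig_mul _ _ _ _ hA IH1.
by split; rewrite exprS -mulmxE //; move=> i; rewrite h2 IH2 exprS.
Qed.

Lemma power_sums (C : numFieldType) n (d : 'I_n -> C) :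
  (forall k, (1 <= k <= n)%N -> \sum_i d i ^+ k = 0) -> forall i, d i = 0.
Proof.
move=> hs i0; apply/eqP; apply: contraT => hmu; set mu := d i0 in hmu.
pose P := fun j => (d j != 0) && (d j != mu).
pose q : {poly C} := \prod_(j <- enum P) ('X - (d j)%:P).
pose p := 'X * q.
have szq : size q = (size (enum P)).+1 by rewrite size_prod_XsubC.
have szP : (size (enum P) < n)%N.
  rewrite -cardE; rewrite -[X in (_ < X)%N]card_ord; apply: proper_card; apply/properP; split.
    by apply/subsetP.
  by exists i0 => //; rewrite /P unfold_in /= eqxx andbF.
have qnz : q != 0 by rewrite -size_poly_eq0 szq.
have szp : size p = (size q).+1.
  by rewrite /p mulrC size_mulX.
have hS0 : \sum_j p.[d j] = 0.
  have -> : \sum_j p.[d j] = \sum_(k < size p) p`_k * \sum_j d j ^+ k.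
    under eq_bigr do rewrite horner_coef.
    rewrite exchange_big; apply: eq_bigr => k _; by rewrite mulr_sumr.
  apply: big1 => k _; case: k => [[|k] hk] /=.
    by rewrite /p coefXM eqxx mul0r.
  rewrite hs ?mulr0 //=.
  by move: hk; rewrite szp szq !ltnS => hk; exact: leq_ltn_trans hk szP.
have pmu : p.[mu] != 0.
  rewrite /p hornerM hornerX mulf_neq0 // /q horner_prod.
  rewrite prodf_seq_neq0; apply/allP => j; rewrite mem_enum /P => /andP [_ hj].
  by rewrite hornerXsubC subr_eq0 eq_sym.
have hS1 : \sum_j p.[d j] = \sum_(j | d j == mu) p.[mu].
  rewrite (bigID (fun j => d j == mu)) /= [X in _ + X]big1 ?addr0.
    by apply: eq_bigr => j /eqP ->.
  move=> j hj; rewrite /p hornerM hornerX.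
  have [->|hj0] := eqVneq (d j) 0; first by rewrite mul0r.
  rewrite /q horner_prod (bigD1_seq j) /= ?enum_uniq //; last by rewrite mem_enum unfold_in /= hj0.
  by rewrite hornerXsubC subrr mul0r mulr0.
move: hS0; rewrite hS1 sumr_const => /eqP; rewrite -mulr_natl mulf_eq0 (negbTE pmu) orbF.
rewrite pnatr_eq0 => /eqP hc.
have : (0 < #|[pred j | d j == mu]|)%N by apply/card_gt0P; exists i0; rewrite inE.
by rewrite hc.
Qed.

Lemma trace_nilp (C : numClosedFieldType) n (A : 'M[C]_n.+1) :
  (forall k, (1 <= k <= n.+1)%N -> \tr (A ^+ k) = 0) -> A ^+ n.+1 = 0.
Proof.
move=> htr; have [P Pu hT] := Schur A (ltn0Sn n).
have Pun : P \in unitmx := unitarymx_unit Pu.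
move: hT; rewrite /similar_to conjumx // => hT.
set T := P *m A *m invmx P in hT.
have TkE k : T ^+ k = P *m A ^+ k *m invmx P.
  elim: k => [|k IH]; first by rewrite !expr0 mulmx1 mulmxV.
  by rewrite exprS -mulmxE IH /T !mulmxA mulmxKV // exprS -mulmxE !mulmxA.
have htrT k : (1 <= k <= n.+1)%N -> \sum_i T i i ^+ k = 0.
  move=> hk; have [_ h2] := trig_exp _ _ T k hT.
  have e1 : \tr (T ^+ k) = \tr (A ^+ k) by rewrite TkE mxtrace_mulC mulmxA mulVmx // mul1mx.
  transitivity (\tr (T ^+ k)); last by rewrite e1 htr.
  by rewrite /mxtrace; apply: eq_bigr => i _; rewrite h2.
have hd := power_sums _ _ _ htrT.
have hchar : char_poly T = 'X^(n.+1).
  rewrite char_poly_trig //; under eq_bigr do rewrite hd subr0.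
  by rewrite prodr_const card_ord.
have hT0 : T ^+ n.+1 = 0.
  by have := Cayley_Hamilton T; rewrite hchar rmorphXn /= horner_mx_X.
move: hT0; rewrite TkE => /(congr1 (fun M => invmx P *m M *m P)).
by rewrite /= mulmx0 mul0mx !mulmxA mulVmx // mul1mx mulmxKV.
Qed.


Lemma bf_map (F1 F2 : comNzRingType) (f : {rmorphism F1 -> F2}) m (S : 'M[F1]_m) x y :
  f (bf S x y) = bf (map_mx f S) (map_mx f x) (map_mx f y).
Proof. by rewrite /bf map_trmx -!map_mxM [RHS]mxE. Qed.

Lemma jacobiE (F : fieldType) m (G : 'M[F]_m) T x : jacobi G T x = Jm (invmx G) T x.
Proof. by []. Qed.

Lemma Jm_ext (F : comNzRingType) m (Gi : 'M[F]_m) (T1 T2 : tensor4 F m) x :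
  (forall i j k l, T1 i j k l = T2 i j k l) -> Jm Gi T1 x = Jm Gi T2 x.
Proof.
move=> h; rewrite /Jm; congr (_ *m _); apply/matrixP => a b; rewrite !mxE /Rform.
apply: eq_bigr => i _; apply: eq_bigr => j _; apply: eq_bigr => k _; apply: eq_bigr => l _.
by rewrite h.
Qed.

Lemma map_mx_id_comp (F1 F2 : comNzRingType) (f : F1 -> F2) (g : F2 -> F1) m n (M : 'M[F1]_(m, n)) :
  (forall z, g (f z) = z) -> map_mx g (map_mx f M) = M.
Proof. by move=> h; apply/matrixP => i j; rewrite !mxE h. Qed.

Section Part1.
Variables (R : realType) (m : nat) (G : 'M[R]_m) (T : tensor4 R m) (k : nat) (c : R).
Hypothesis hst : forall x : 'rV[R]_m, \tr (jacobi G T x ^+ k) = c * ip G x x ^+ k.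

Let f := real_complex R.

Let hreal (x : 'rV[R]_m) :
  \tr (jacobi (cplxG G) (cplxT T) (map_mx f x) ^+ k) = real_complex R c * ip (cplxG G) (map_mx f x) (map_mx f x) ^+ k.
Proof.
have -> : jacobi (cplxG G) (cplxT T) (map_mx f x) = map_mx f (jacobi G T x).
  by rewrite jacobiE (Jm_map _ _ f) map_invmx.
rewrite -map_mxX trace_map_mx hst rmorphM rmorphXn.
by rewrite (bf_map _ _ f).
Qed.

Lemma part1_all (v : 'rV[complex R]_m) :
  \tr (jacobi (cplxG G) (cplxT T) v ^+ k) = real_complex R c * ip (cplxG G) v v ^+ k.
Proof.
pose ar := map_mx (@complex.Re R) v; pose br := map_mx (@complex.Im R) v.
have hv : v = map_mx f ar + 'i%C *: map_mx f br.
  by apply/matrixP => i j; rewrite !mxE {1}[v i j]complexE.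
pose pC := (@polyC (complex R)).
pose V : 'rV[{poly complex R}]_m := map_mx pC (map_mx f ar) + 'X *: map_mx pC (map_mx f br).
pose Gi := invmx (cplxG G).
pose Jp := Jm (map_mx pC Gi) (fun i j k l => pC (cplxT T i j k l)) V.
pose gp := \tr (Jp ^+ k) - (real_complex R c)%:P * (bf (map_mx pC (cplxG G)) V V) ^+ k.
have hev t : gp.[t] = \tr (jacobi (cplxG G) (cplxT T) (map_mx f ar + t *: map_mx f br) ^+ k)
     - real_complex R c * ip (cplxG G) (map_mx f ar + t *: map_mx f br) (map_mx f ar + t *: map_mx f br) ^+ k.
  have hV : map_mx (horner_eval t) V = map_mx f ar + t *: map_mx f br.
    by apply/matrixP => i j; rewrite !mxE /= horner_evalE /pC !hornerE.
  have hid M : map_mx (horner_eval t) (map_mx pC M) = M :> 'M[complex R]_m.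
    by apply: map_mx_id_comp => z; rewrite /= horner_evalE /pC hornerC.
  have h1 : horner_eval t (\tr (Jp ^+ k)) = \tr (jacobi (cplxG G) (cplxT T) (map_mx f ar + t *: map_mx f br) ^+ k).
    rewrite -trace_map_mx map_mxX /Jp (Jm_map _ _ (horner_eval t)) hid hV jacobiE /Gi.
    congr (\tr (_ ^+ k)); apply: Jm_ext => i j a b; by rewrite /= horner_evalE hornerC.
  have h2 : horner_eval t ((real_complex R c)%:P * (bf (map_mx pC (cplxG G)) V V) ^+ k)
     = real_complex R c * ip (cplxG G) (map_mx f ar + t *: map_mx f br) (map_mx f ar + t *: map_mx f br) ^+ k.
    by rewrite rmorphM rmorphXn (bf_map _ _ (horner_eval t)) hid hV /= horner_evalE hornerC.
  rewrite -h1 -h2 !horner_evalE.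
  by rewrite /gp hornerD hornerN.
have gp0 : gp = 0.
  apply: poly_nat_roots => n; rewrite hev.
  have -> : map_mx f ar + n%:R *: map_mx f br = map_mx f (ar + n%:R *: br).
    by rewrite map_mxD map_mxZ rmorph_nat.
  by rewrite hreal subrr.
have := hev 'i%C; rewrite gp0 horner0 -hv => /eqP; rewrite eq_sym subr_eq0 => /eqP.
done.
Qed.

End Part1.


Theorem lemma2p1 (R : realType) (m : nat) (G : 'M[R]_m) (T : tensor4 R m) :
  (3 <= m)%N -> G^T = G -> \det G != 0 -> is_ACT T ->
  [/\ (forall k : nat, (1 <= k)%N -> k_stein k G T ->
         forall v : 'rV[complex R]_m, nullcone G v ->
           \tr (jacobi (cplxG G) (cplxT T) v ^+ k) = 0),
      (k_stein m G T ->
         forall v : 'rV[complex R]_m, nullcone G v ->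
           nilpotent_mx (jacobi (cplxG G) (cplxT T) v)) &
      ((forall v : 'rV[complex R]_m, nullcone G v ->
           \tr (jacobi (cplxG G) (cplxT T) v) = 0) ->
         einstein G T)].
Proof.
case: m G T => [//|m] G T hm hG hdet hT.
pose f := real_complex R.
have fnz z : z != 0 -> f z != 0.
  move=> hz; apply: contra hz => /eqP h; apply/eqP; apply: (fmorph_inj f).
  by rewrite rmorph0.
have part1 k c : (1 <= k)%N -> (forall x, \tr (jacobi G T x ^+ k) = c * ip G x x ^+ k) ->
    forall v, nullcone G v -> \tr (jacobi (cplxG G) (cplxT T) v ^+ k) = 0.
  move=> hk hc v hv; rewrite (@part1_all R m.+1 G T k c hc v).
  by move: hv; rewrite /nullcone => ->; rewrite expr0n eqn0Ngt hk mulr0.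
split.
- move=> k hk [c hc] v hv; apply: (part1 k (c k)) => // x.
  by apply: hc; rewrite hk leqnn.
- move=> [c hc] v hv; exists m.+1; apply: trace_nilp => k hk.
  apply: (part1 k (c k)) => //; first by case/andP: hk.
  by move=> x; apply: hc.
move=> htr.
have [x0 hx0] : exists x0, ip G x0 x0 != 0.
  apply: NNPP => hn.
  have hall x : bf G x x = 0.
    by apply/eqP; apply: contraT => hy; case: hn; exists x.
  have G0 : G = 0.
    apply/matrixP => i j; rewrite -bf_e mxE.
    have := bf_quad _ _ G (delta_mx 0 i) (delta_mx 0 j) 1 hG.
    rewrite scale1r !hall add0r expr1n mulr0 addr0 mulr1 => /eqP.
    rewrite eq_sym mulf_eq0 pnatr_eq0 /= => /eqP.
    done.
  by move: hdet; rewrite G0 det0 eqxx.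
pose S := Sm G T.
have hSs : S^T = S by apply: Sm_sym.
have hSC : Sm (cplxG G) (cplxT T) = map_mx f S.
  apply/matrixP => j k; rewrite !mxE /f rmorph_sum; apply: eq_bigr => a _.
  rewrite rmorph_sum; apply: eq_bigr => b _.
  have -> : invmx (cplxG G) = map_mx f (invmx G) by rewrite map_invmx.
  by rewrite rmorphM mxE.
have hcore := @core_result (complex R) m.+1 (cplxG G) (map_mx f S) (map_mx f x0).
have key w : bf S w w * ip G x0 x0 = bf S x0 x0 * ip G w w.
  apply: (fmorph_inj f); rewrite !rmorphM !(bf_map _ _ f).
  apply: hcore.
  - by apply: leq_trans hm.
  - by rewrite map_trmx hG.
  - by rewrite map_trmx hSs.
  - by rewrite unitmxE (_ : cplxG G = map_mx f G) // det_map_mx unitfE fnz.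
  - by rewrite -(bf_map _ _ f) fnz.
  - move=> v hv; rewrite -hSC -ricci_bf; exact: htr.
exists (bf S x0 x0 / ip G x0 x0) => x y.
have hw w : bf S w w = bf S x0 x0 / ip G x0 x0 * bf G w w.
  by rewrite mulrAC -key mulfK.
have pol M : M^T = M -> bf M (x + y) (x + y) = bf M x x + 2 * bf M x y + bf M y y.
  move=> hM; have := bf_quad _ _ M x y 1 hM.
  by rewrite scale1r mulr1 expr1n mul1r.
have h1 := pol S hSs.
rewrite (hw (x + y)) (hw x) (hw y) (pol G hG) in h1.
rewrite ricci_bf; change (bf S x y = bf S x0 x0 / ip G x0 x0 * bf G x y).
set c := bf S x0 x0 / ip G x0 x0 in h1 *.
set s := bf S x y in h1 *; set g := bf G x y in h1 *.
set qx := bf G x x in h1; set qy := bf G y y in h1.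
have h2 : (2 : R) != 0 by rewrite pnatr_eq0.
apply: (mulfI h2).
have -> : 2 * s = c * (qx + 2 * g + qy) - c * qx - c * qy by rewrite h1; ring.
ring.
Qed.
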